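(* Let $k:[0,1]\times[0,1]\to\mathbb{R}$ be continuous and let $f$ be a real function of $(x,u,v,z)$. Define $$G_0(x,s)=\frac16\begin{cases} s(x-1)(x^2-x+s^2), & 0\le s\le x\le 1,\\ x(s-1)(s^2-s+x^2), & 0\le x\le s\le 1,\end{cases}\qquad G_1(x,s)=\frac16\begin{cases} s(3x^2-6x+s^2+2), & 0\le s\le x\le 1,\\ (s-1)(3x^2-2s+s^2), & 0\le x\le s\le 1,\end{cases}$$ $M_0=\max_{0\le x\le1}\int_0^1|G_0(x,s)|\,ds$, $M_1=\max_{0\le x\le 1}\int_0^1|G_1(x,s)|\,ds$, $M_2=\max_{0\le x\le1}\int_0^1|k(x,s)|\,ds$, and for $M>0$ $$\mathcal{D}_M=\{(x,u,v,z): 0\le x\le 1,\ |u|\le M_0M,\ |v|\le M_1M,\ |z|\le M_0M_2M\}.$$ Suppose there exist numbers $M>0$ and $L_0,L_1,L_2\ge 0$ such that: (i) $f$ is continuous on $\mathcal{D}_M$ and $|f(x,u,v,z)|\le M$ for all $(x,u,v,z)\in\mathcal{D}_M$; (ii) $|f(x_2,u_2,v_2,z_2)-f(x_1,u_1,v_1,z_1)|\le L_0|u_2-u_1|+L_1|v_2-v_1|+L_2|z_2-z_1|$ for all $(x_i,u_i,v_i,z_i)\in\mathcal{D}_M$, $i=1,2$; (iii) $q:=L_0M_0+L_1M_1+L_2M_0M_2<1$. Then the problem $$u^{(4)}(x)=f\Big(x,u(x),u'(x),\int_0^1 k(x,t)u(t)\,dt\Big),\ 0<x<1,\qquad u(0)=u(1)=u''(0)=u''(1)=0$$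 has a unique solution $u\in C^4[0,1]$ satisfying $|u(x)|\le M_0M$ and $|u'(x)|\le M_1M$ for all $0\le x\le 1$.
   Context: $G_0$ is the Green function of $u''''=0$ with boundary conditions $u(0)=u''(0)=u(1)=u''(1)=0$, and $G_1=\partial G_0/\partial x$. The paper computes $M_0=5/384$ and $M_1=1/24$. *)

(* Defs.v *)
From Stdlib Require Import Reals.
From Coquelicot Require Import Coquelicot.
Open Scope R_scope.

Definition I01 (x : R) : Prop := 0 <= x <= 1.

(* Green function of u''''=0, u(0)=u''(0)=u(1)=u''(1)=0. *)
Definition G0 (x s : R) : R :=
  if Rle_dec s x then / 6 * (s * (x - 1) * (x ^ 2 - 2 * x + s ^ 2))
  else / 6 * (x * (s - 1) * (s ^ 2 - 2 * s + x ^ 2)).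

(* G1 = dG0/dx, exactly as in the paper. *)
Definition G1 (x s : R) : R :=
  if Rle_dec s x then / 6 * (s * (3 * x ^ 2 - 6 * x + s ^ 2 + 2))
  else / 6 * ((s - 1) * (3 * x ^ 2 - 2 * s + s ^ 2)).

(* max_{0<=x<=1} int_0^1 |K(x,s)| ds, realised as the supremum (attained,
   since the integrand is continuous in x). *)
Definition max_int_abs (K : R -> R -> R) : R :=
  real (Lub_Rbar (fun y => exists x, I01 x /\ y = RInt (fun s => Rabs (K x s)) 0 1)).

Definition M0 : R := max_int_abs G0.
Definition M1 : R := max_int_abs G1.
Definition M2 (k : R -> R -> R) : R := max_int_abs k.

Definition DM (k : R -> R -> R) (M x u v z : R) : Prop :=
  I01 x /\ Rabs u <= M0 * M /\ Rabs v <= M1 * M /\ Rabs z <= M0 * M2 k * M.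

Definition cont_on_square (k : R -> R -> R) : Prop :=
  forall x s, I01 x -> I01 s -> forall eps, 0 < eps -> exists delta, 0 < delta /\
    forall x' s', I01 x' -> I01 s' -> Rabs (x' - x) < delta -> Rabs (s' - s) < delta ->
      Rabs (k x' s' - k x s) < eps.

Definition cont_on4 (f : R -> R -> R -> R -> R) (D : R -> R -> R -> R -> Prop) : Prop :=
  forall x u v z, D x u v z -> forall eps, 0 < eps -> exists delta, 0 < delta /\
    forall x' u' v' z', D x' u' v' z' ->
      Rabs (x' - x) < delta -> Rabs (u' - u) < delta ->
      Rabs (v' - v) < delta -> Rabs (z' - z) < delta ->
      Rabs (f x' u' v' z' - f x u v z) < eps.

Definition is_deriv01 (g g' : R -> R) : Prop :=
  forall x, I01 x ->
    filterlim (fun y => (g y - g x) / (y - x))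
      (within (fun y => I01 y /\ y <> x) (locally x)) (locally (g' x)).

Definition cont01 (g : R -> R) : Prop :=
  forall x, I01 x -> filterlim g (within I01 (locally x)) (locally (g x)).

Definition C4_01 (u u1 u2 u3 u4 : R -> R) : Prop :=
  is_deriv01 u u1 /\ is_deriv01 u1 u2 /\ is_deriv01 u2 u3 /\ is_deriv01 u3 u4 /\
  cont01 u4.

Definition is_solution (f : R -> R -> R -> R -> R) (k : R -> R -> R) (M : R)
  (u u1 u2 u3 u4 : R -> R) : Prop :=
  C4_01 u u1 u2 u3 u4 /\
  (forall x, 0 < x < 1 -> u4 x = f x (u x) (u1 x) (RInt (fun t => k x t * u t) 0 1)) /\
  u 0 = 0 /\ u 1 = 0 /\ u2 0 = 0 /\ u2 1 = 0 /\
  (forall x, I01 x -> Rabs (u x) <= M0 * M /\ Rabs (u1 x) <= M1 * M).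

(* Main.v *)
Require Import Defs.
From Stdlib Require Import Reals Lra Lia Classical.
From Coquelicot Require Import Coquelicot.
Open Scope R_scope.


Lemma real_ind (P : R -> Prop) :
  P 0 ->
  (forall T, 0 < T <= 1 -> (forall t, 0 <= t < T -> P t) -> P T) ->
  (forall T, 0 <= T < 1 -> P T -> exists d, 0 < d /\ forall t, T < t < T + d -> t <= 1 -> P t) ->
  P 1.
Proof.
  intros H0 H2 H3.
  set (S := fun t => 0 <= t <= 1 /\ forall s, 0 <= s <= t -> P s).
  assert (S0 : S 0).
  { split. lra. intros s Hs. replace s with 0 by lra. exact H0. }
  destruct (completeness S) as [T [HubT HleT]].
  { exists 1. intros t [Ht _]. lra. }
  { exists 0. exact S0. }
  assert (T0 : 0 <= T) by (apply HubT; exact S0).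
  assert (T1 : T <= 1).
  { apply HleT. intros t [Ht _]. lra. }
  assert (Hlt : forall s, 0 <= s < T -> P s).
  { intros s Hs. destruct (classic (exists t, S t /\ s < t)) as [[t [[_ Ht] Hst]]|Hn].
    - apply Ht. lra.
    - exfalso. assert (T <= s). { apply HleT. intros t Ht. destruct (Rle_dec t s). lra.
        exfalso. apply Hn. exists t. split. exact Ht. lra. } lra. }
  assert (PT : P T).
  { destruct (Req_dec T 0) as [e|ne]. rewrite e. exact H0. apply H2. lra. exact Hlt. }
  assert (ST : S T).
  { split. lra. intros s Hs. destruct (Req_dec s T) as [e|ne]. rewrite e; exact PT. apply Hlt. lra. }
  destruct (Req_dec T 1) as [e|ne]. rewrite <- e. exact PT.
  destruct (H3 T) as [d [Hd Hd']]. lra. exact PT.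
  set (t := Rmin 1 (T + d/2)).
  assert (St : S t).
  { unfold t. split. unfold Rmin; destruct (Rle_dec 1 (T + d/2)); lra.
    intros s Hs. destruct (Rle_dec s T). apply ST. lra.
    apply Hd'. split. lra. unfold Rmin in Hs; destruct (Rle_dec 1 (T + d/2)); lra.
    unfold Rmin in Hs; destruct (Rle_dec 1 (T + d/2)); lra. }
  assert (t <= T) by (apply HubT; exact St).
  unfold t in H; unfold Rmin in H; destruct (Rle_dec 1 (T + d/2)); lra.
Qed.

Lemma ballR x (e:posreal) y : ball x e y <-> Rabs (y - x) < e.
Proof. unfold ball; simpl. unfold AbsRing_ball, abs, minus, plus, opp; simpl. tauto. Qed.

Lemma within_iff (D : R -> Prop) (x : R) (h : R -> R) l :
  filterlim h (within D (locally x)) (locally l) <->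
  forall eps, 0 < eps -> exists d, 0 < d /\ forall y, D y -> Rabs (y - x) < d -> Rabs (h y - l) < eps.
Proof.
  rewrite filterlim_locally. split.
  - intros H e He. destruct (H (mkposreal e He)) as [d Hd]. exists d. split. apply cond_pos.
    intros y Dy Hy. specialize (Hd y). rewrite ballR in Hd. specialize (Hd Hy Dy). rewrite ballR in Hd. exact Hd.
  - intros H e. destruct (H e (cond_pos e)) as [d [Hd H']]. exists (mkposreal d Hd).
    intros y Hy Dy. rewrite ballR in Hy. rewrite ballR. apply H'; auto.
Qed.

Lemma deriv01_iff F F' : is_deriv01 F F' <-> forall x, I01 x -> forall eps, 0 < eps -> exists d, 0 < d /\
   forall y, I01 y -> y <> x -> Rabs (y - x) < d -> Rabs ((F y - F x)/(y - x) - F' x) < eps.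
Proof.
  unfold is_deriv01. split.
  - intros H x Hx e He. destruct (proj1 (within_iff _ _ _ _) (H x Hx) e He) as [d [Hd H']].
    exists d. split. auto. intros y Hy Hyx Hd'. apply H'; auto.
  - intros H x Hx. apply within_iff. intros e He. destruct (H x Hx e He) as [d [Hd H']].
    exists d. split. auto. intros y [Hy Hyx] Hd'. apply H'; auto.
Qed.

Lemma cont01_iff g : cont01 g <-> forall x, I01 x -> forall eps, 0 < eps -> exists d, 0 < d /\
   forall y, I01 y -> Rabs (y - x) < d -> Rabs (g y - g x) < eps.
Proof.
  unfold cont01. split.
  - intros H x Hx. exact (proj1 (within_iff _ _ _ _) (H x Hx)).
  - intros H x Hx. apply within_iff. apply H. auto.
Qed.

Lemma cont_iff (g:R->R) (x:R) : continuous g x <-> forall eps, 0 < eps -> exists d, 0 < d /\ forall y, Rabs (y - x) < d -> Rabs (g y - g x) < eps.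
Proof.
unfold continuous. rewrite <- continuity_pt_filterlim. unfold continuity_pt, continue_in, limit1_in, limit_in. simpl. unfold R_dist, D_x, no_cond. split.
intros H e He. destruct (H e He) as [d [Hd H']]. exists d. split. auto. intros y Hy.
destruct (Req_dec y x). subst. rewrite Rminus_eq_0, Rabs_R0. auto. apply H'. split. split. auto. auto. auto.
intros H e He. destruct (H e He) as [d [Hd H']]. exists d. split. auto. intros y [_ Hy]. apply H'. auto. Qed.

Definition ctsR (g : R -> R) := forall x, continuous g x.
Lemma ctsR_mulp (p g : R -> R) : (forall x, ex_derive p x) -> ctsR g -> ctsR (fun s => p s * g s).
Proof. intros Hp Hg x. apply (@continuous_mult R_UniformSpace R_AbsRing p g x). apply (@ex_derive_continuous R_AbsRing R_NormedModule). auto. auto. Qed.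
Definition A1 g x := RInt (fun s => s * g s) 0 x.
Definition A3 g x := RInt (fun s => s^3 * g s) 0 x.
Definition Bq g x := RInt (fun s => (s^3 - 3*s^2 + 2*s) * g s) x 1.
Definition Cq g x := RInt (fun s => (s - 1) * g s) x 1.
Lemma ex_RInt_cts f a b : ctsR f -> ex_RInt f a b.
Proof. intros H. apply (@ex_RInt_continuous R_CompleteNormedModule). intros; apply H. Qed.
Lemma der_up f a x : ctsR f -> is_derive (fun b => RInt f a b) x (f x).
Proof. intros H. apply is_derive_RInt with (a:=a). apply filter_forall. intros. apply (@RInt_correct R_CompleteNormedModule). apply ex_RInt_cts; auto. apply H. Qed.
Lemma der_lo f b x : ctsR f -> is_derive (fun a => RInt f a b) x (- f x).
Proof. intros H. apply (is_derive_RInt' f (fun a => RInt f a b) x b). apply filter_forall. intros. apply (@RInt_correct R_CompleteNormedModule). apply ex_RInt_cts; auto. apply H. Qed.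
Definition U g x := /6 * ((x^3 - 3*x^2 + 2*x) * A1 g x + (x - 1) * A3 g x + x * Bq g x + x^3 * Cq g x).
Definition U1 g x := /6 * ((3*x^2 - 6*x + 2) * A1 g x + A3 g x + Bq g x + 3*x^2 * Cq g x).
Definition U2 g x := (x - 1) * A1 g x + x * Cq g x.
Definition U3 g x := A1 g x + Cq g x.
Lemma cts_A1 g : ctsR g -> ctsR (fun s => s * g s).
Proof. intros; apply ctsR_mulp; auto. intros; auto_derive; auto. Qed.
Lemma cts_A3 g : ctsR g -> ctsR (fun s => s^3 * g s).
Proof. intros; apply ctsR_mulp; auto. intros; auto_derive; auto. Qed.
Lemma cts_B g : ctsR g -> ctsR (fun s => (s^3 - 3*s^2 + 2*s) * g s).
Proof. intros; apply ctsR_mulp; auto. intros; auto_derive; auto. Qed.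
Lemma cts_C g : ctsR g -> ctsR (fun s => (s - 1) * g s).
Proof. intros; apply ctsR_mulp; auto. intros; auto_derive; auto. Qed.
Lemma der_U g x : ctsR g -> is_derive (U g) x (U1 g x).
Proof.
  intros Hg.
  assert (D1 : is_derive (A1 g) x (x * g x)) by exact (der_up _ 0 x (cts_A1 g Hg)).
  assert (D3 : is_derive (A3 g) x (x^3 * g x)) by exact (der_up _ 0 x (cts_A3 g Hg)).
  assert (DB : is_derive (Bq g) x (- ((x^3 - 3*x^2 + 2*x) * g x))) by exact (der_lo _ 1 x (cts_B g Hg)).
  assert (DC : is_derive (Cq g) x (- ((x - 1) * g x))) by exact (der_lo _ 1 x (cts_C g Hg)).
  unfold U. auto_derive.
  repeat split; eexists; eauto.
  replace (Derive (fun x0 => A1 g x0) x) with (x * g x) by (symmetry; apply is_derive_unique; exact D1).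
  replace (Derive (fun x0 => A3 g x0) x) with (x^3 * g x) by (symmetry; apply is_derive_unique; exact D3).
  replace (Derive (fun x0 => Bq g x0) x) with (- ((x^3 - 3*x^2 + 2*x) * g x)) by (symmetry; apply is_derive_unique; exact DB).
  replace (Derive (fun x0 => Cq g x0) x) with (- ((x - 1) * g x)) by (symmetry; apply is_derive_unique; exact DC).
  unfold U1. ring.
Qed.

Ltac derU_tac g x Hg :=
  assert (D1 : is_derive (A1 g) x (x * g x)) by exact (der_up _ 0 x (cts_A1 g Hg));
  assert (D3 : is_derive (A3 g) x (x^3 * g x)) by exact (der_up _ 0 x (cts_A3 g Hg));
  assert (DB : is_derive (Bq g) x (- ((x^3 - 3*x^2 + 2*x) * g x))) by exact (der_lo _ 1 x (cts_B g Hg));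
  assert (DC : is_derive (Cq g) x (- ((x - 1) * g x))) by exact (der_lo _ 1 x (cts_C g Hg));
  auto_derive;
  [ repeat split; eexists; eauto
  | try replace (Derive (fun x0 => A1 g x0) x) with (x * g x) by (symmetry; apply is_derive_unique; exact D1);
    try replace (Derive (fun x0 => A3 g x0) x) with (x^3 * g x) by (symmetry; apply is_derive_unique; exact D3);
    try replace (Derive (fun x0 => Bq g x0) x) with (- ((x^3 - 3*x^2 + 2*x) * g x)) by (symmetry; apply is_derive_unique; exact DB);
    try replace (Derive (fun x0 => Cq g x0) x) with (- ((x - 1) * g x)) by (symmetry; apply is_derive_unique; exact DC) ].

Lemma der_U1 g x : ctsR g -> is_derive (U1 g) x (U2 g x).
Proof. intros Hg. unfold U1. derU_tac g x Hg. unfold U2. field. Qed.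
Lemma der_U2 g x : ctsR g -> is_derive (U2 g) x (U3 g x).
Proof. intros Hg. unfold U2. derU_tac g x Hg. unfold U3. ring. Qed.
Lemma der_U3 g x : ctsR g -> is_derive (U3 g) x (g x).
Proof. intros Hg. unfold U3. derU_tac g x Hg. ring. Qed.

Lemma U_0 g : U g 0 = 0.
Proof. unfold U, A1, A3. rewrite !RInt_point. simpl. unfold zero; simpl. ring. Qed.
Lemma U_1 g : U g 1 = 0.
Proof. unfold U, Bq, Cq. rewrite !RInt_point. simpl. unfold zero; simpl. ring. Qed.
Lemma U2_0 g : U2 g 0 = 0.
Proof. unfold U2, A1. rewrite !RInt_point. simpl. unfold zero; simpl. ring. Qed.
Lemma U2_1 g : U2 g 1 = 0.
Proof. unfold U2, Cq. rewrite !RInt_point. simpl. unfold zero; simpl. ring. Qed.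

Lemma ctsR_plus f g : ctsR f -> ctsR g -> ctsR (fun s => f s + g s).
Proof. intros Hf Hg x. apply (@continuous_plus R_UniformSpace R_AbsRing R_NormedModule f g x); auto. Qed.
Lemma ctsR_minus f g : ctsR f -> ctsR g -> ctsR (fun s => f s - g s).
Proof. intros Hf Hg x. apply (@continuous_plus R_UniformSpace R_AbsRing R_NormedModule f (fun s => - g s) x); auto.
  apply (@continuous_opp R_UniformSpace R_AbsRing R_NormedModule g x); auto. Qed.
Lemma ctsR_abs f : ctsR f -> ctsR (fun s => Rabs (f s)).
Proof. intros Hf x. apply continuous_Rabs_comp. auto. Qed.
Lemma ctsR_der p : (forall x, ex_derive p x) -> ctsR p.
Proof. intros Hp x. apply (@ex_derive_continuous R_AbsRing R_NormedModule). auto. Qed.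
Lemma ctsR_const c : ctsR (fun _ => c).
Proof. intros x. apply continuous_const. Qed.

Lemma RInt_extR (f g : R -> R) a b : (forall x, Rmin a b < x < Rmax a b -> f x = g x) -> RInt f a b = RInt g a b.
Proof. apply RInt_ext. Qed.
Lemma ex_RInt_extR (f g : R -> R) a b : (forall x, Rmin a b < x < Rmax a b -> f x = g x) -> ex_RInt f a b -> ex_RInt g a b.
Proof. apply ex_RInt_ext. Qed.
Lemma RI_lin2 f h a b c1 c2 : ex_RInt f a b -> ex_RInt h a b ->
  RInt (fun s => c1 * f s + c2 * h s) a b = c1 * RInt f a b + c2 * RInt h a b.
Proof.
  intros Hf Hh.
  assert (E1 : ex_RInt (fun s => c1 * f s) a b) by exact (ex_RInt_scal f a b c1 Hf).
  assert (E2 : ex_RInt (fun s => c2 * h s) a b) by exact (ex_RInt_scal h a b c2 Hh).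
  assert (S1 : RInt (fun s => c1 * f s) a b = c1 * RInt f a b) by exact (RInt_scal f a b c1 Hf).
  assert (S2 : RInt (fun s => c2 * h s) a b = c2 * RInt h a b) by exact (RInt_scal h a b c2 Hh).
  assert (P : RInt (fun s => c1 * f s + c2 * h s) a b = RInt (fun s => c1 * f s) a b + RInt (fun s => c2 * h s) a b)
    by exact (RInt_plus _ _ a b E1 E2).
  rewrite P, S1, S2. reflexivity.
Qed.
Lemma exRI_lin2 f h a b c1 c2 : ex_RInt f a b -> ex_RInt h a b ->
  ex_RInt (fun s => c1 * f s + c2 * h s) a b.
Proof.
  intros Hf Hh.
  assert (E1 : ex_RInt (fun s => c1 * f s) a b) by exact (ex_RInt_scal f a b c1 Hf).
  assert (E2 : ex_RInt (fun s => c2 * h s) a b) by exact (ex_RInt_scal h a b c2 Hh).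
  exact (ex_RInt_plus _ _ a b E1 E2).
Qed.
Lemma RI_minus f h a b : ex_RInt f a b -> ex_RInt h a b ->
  RInt (fun s => f s - h s) a b = RInt f a b - RInt h a b.
Proof.
  intros Hf Hh. pose proof (RI_lin2 f h a b 1 (-1) Hf Hh) as P.
  replace (RInt f a b - RInt h a b) with (1 * RInt f a b + -1 * RInt h a b) by ring.
  rewrite <- P. apply RInt_extR. intros; ring.
Qed.
Lemma exRI_minus f h a b : ex_RInt f a b -> ex_RInt h a b ->
  ex_RInt (fun s => f s - h s) a b.
Proof.
  intros Hf Hh. apply (ex_RInt_extR (fun s => 1 * f s + -1 * h s)). intros; ring.
  apply exRI_lin2; auto.
Qed.
Lemma RI_scal_r f a b c : ex_RInt f a b -> RInt (fun s => f s * c) a b = RInt f a b * c.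
Proof.
  intros Hf. assert (P : RInt (fun s => c * f s) a b = c * RInt f a b) by exact (RInt_scal f a b c Hf).
  rewrite Rmult_comm. rewrite <- P. apply RInt_extR. intros. ring.
Qed.
Lemma exRI_scal_r f a b c : ex_RInt f a b -> ex_RInt (fun s => f s * c) a b.
Proof.
  intros Hf. apply (ex_RInt_extR (fun s => c * f s)). intros. ring.
  exact (ex_RInt_scal f a b c Hf).
Qed.
Lemma RI_const01 (c : R) : RInt (fun _ => c) 0 1 = c.
Proof. rewrite RInt_const. unfold scal; simpl; unfold mult; simpl. ring. Qed.
Lemma exRI_const a b (c : R) : ex_RInt (fun _ => c) a b.
Proof. apply ex_RInt_cts. apply ctsR_const. Qed.

Lemma int_bound f w : ex_RInt f 0 1 -> ex_RInt w 0 1 ->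
  (forall s, 0 < s < 1 -> Rabs (f s) <= w s) -> Rabs (RInt f 0 1) <= RInt w 0 1.
Proof.
  intros Hf Hw H. apply Rabs_le. split.
  - assert (E : ex_RInt (fun s => 0 * w s + -1 * w s) 0 1) by (apply exRI_lin2; auto).
    assert (RInt (fun s => 0 * w s + -1 * w s) 0 1 <= RInt f 0 1).
    { apply RInt_le; auto. lra. intros s Hs. specialize (H s Hs). apply Rabs_le_between in H. lra. }
    rewrite RI_lin2 in H0; auto. lra.
  - apply RInt_le; auto. lra. intros s Hs. specialize (H s Hs). apply Rabs_le_between in H. lra.
Qed.

Lemma piece_ex F p q x : 0 <= x <= 1 -> ctsR p -> ctsR q ->
  (forall s, 0 < s < x -> F s = p s) -> (forall s, x < s < 1 -> F s = q s) -> ex_RInt F 0 1.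
Proof.
  intros Hx Hp Hq H1 H2. apply ex_RInt_Chasles with x.
  - apply (ex_RInt_extR p). rewrite Rmin_left, Rmax_right by lra. intros; symmetry; apply H1; lra.
    apply ex_RInt_cts; auto.
  - apply (ex_RInt_extR q). rewrite Rmin_left, Rmax_right by lra. intros; symmetry; apply H2; lra.
    apply ex_RInt_cts; auto.
Qed.
Lemma piece_RI F p q x : 0 <= x <= 1 -> ctsR p -> ctsR q ->
  (forall s, 0 < s < x -> F s = p s) -> (forall s, x < s < 1 -> F s = q s) ->
  RInt F 0 1 = RInt p 0 x + RInt q x 1.
Proof.
  intros Hx Hp Hq H1 H2.
  assert (E1 : ex_RInt F 0 x).
  { apply (ex_RInt_extR p). rewrite Rmin_left, Rmax_right by lra. intros; symmetry; apply H1; lra.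
    apply ex_RInt_cts; auto. }
  assert (E2 : ex_RInt F x 1).
  { apply (ex_RInt_extR q). rewrite Rmin_left, Rmax_right by lra. intros; symmetry; apply H2; lra.
    apply ex_RInt_cts; auto. }
  rewrite <- (RInt_Chasles F 0 x 1 E1 E2). simpl. unfold plus; simpl. f_equal.
  - apply RInt_extR. rewrite Rmin_left, Rmax_right by lra. intros; apply H1; lra.
  - apply RInt_extR. rewrite Rmin_left, Rmax_right by lra. intros; apply H2; lra.
Qed.

Lemma green0 g x : ctsR g -> 0 <= x <= 1 ->
  ex_RInt (fun s => G0 x s * g s) 0 1 /\ RInt (fun s => G0 x s * g s) 0 1 = U g x :> R.
Proof.
  intros Hg Hx.
  set (p := fun s => ((x^3-3*x^2+2*x)/6) * (s * g s) + ((x-1)/6) * (s^3 * g s)).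
  set (q := fun s => (x/6) * ((s^3-3*s^2+2*s) * g s) + (x^3/6) * ((s-1) * g s)).
  assert (Hp : ctsR p).
  { unfold p. intros y. apply (ctsR_plus (fun s => ((x^3-3*x^2+2*x)/6) * (s * g s)) (fun s => ((x-1)/6) * (s^3 * g s))).
    apply ctsR_mulp. intros; auto_derive; auto. apply cts_A1; auto.
    apply ctsR_mulp. intros; auto_derive; auto. apply cts_A3; auto. }
  assert (Hq : ctsR q).
  { unfold q. intros y. apply (ctsR_plus (fun s => (x/6) * ((s^3-3*s^2+2*s) * g s)) (fun s => (x^3/6) * ((s-1) * g s))).
    apply ctsR_mulp. intros; auto_derive; auto. apply cts_B; auto.
    apply ctsR_mulp. intros; auto_derive; auto. apply cts_C; auto. }
  assert (H1 : forall s, 0 < s < x -> G0 x s * g s = p s).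
  { intros s Hs. unfold G0, p. destruct (Rle_dec s x). field. lra. }
  assert (H2 : forall s, x < s < 1 -> G0 x s * g s = q s).
  { intros s Hs. unfold G0, q. destruct (Rle_dec s x). lra. field. }
  split. exact (piece_ex _ p q x Hx Hp Hq H1 H2).
  rewrite (piece_RI _ p q x Hx Hp Hq H1 H2). unfold p, q.
  rewrite !RI_lin2 by (apply ex_RInt_cts; first [apply cts_A1|apply cts_A3|apply cts_B|apply cts_C]; auto).
  unfold U, A1, A3, Bq, Cq. field.
Qed.

Lemma green1 g x : ctsR g -> 0 <= x <= 1 ->
  ex_RInt (fun s => G1 x s * g s) 0 1 /\ RInt (fun s => G1 x s * g s) 0 1 = U1 g x :> R.
Proof.
  intros Hg Hx.
  set (p := fun s => ((3*x^2-6*x+2)/6) * (s * g s) + (1/6) * (s^3 * g s)).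
  set (q := fun s => (1/6) * ((s^3-3*s^2+2*s) * g s) + (3*x^2/6) * ((s-1) * g s)).
  assert (Hp : ctsR p).
  { unfold p. intros y. apply (ctsR_plus (fun s => ((3*x^2-6*x+2)/6) * (s * g s)) (fun s => (1/6) * (s^3 * g s))).
    apply ctsR_mulp. intros; auto_derive; auto. apply cts_A1; auto.
    apply ctsR_mulp. intros; auto_derive; auto. apply cts_A3; auto. }
  assert (Hq : ctsR q).
  { unfold q. intros y. apply (ctsR_plus (fun s => (1/6) * ((s^3-3*s^2+2*s) * g s)) (fun s => (3*x^2/6) * ((s-1) * g s))).
    apply ctsR_mulp. intros; auto_derive; auto. apply cts_B; auto.
    apply ctsR_mulp. intros; auto_derive; auto. apply cts_C; auto. }
  assert (H1 : forall s, 0 < s < x -> G1 x s * g s = p s).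
  { intros s Hs. unfold G1, p. destruct (Rle_dec s x). field. lra. }
  assert (H2 : forall s, x < s < 1 -> G1 x s * g s = q s).
  { intros s Hs. unfold G1, q. destruct (Rle_dec s x). lra. field. }
  split. exact (piece_ex _ p q x Hx Hp Hq H1 H2).
  rewrite (piece_RI _ p q x Hx Hp Hq H1 H2). unfold p, q.
  rewrite !RI_lin2 by (apply ex_RInt_cts; first [apply cts_A1|apply cts_A3|apply cts_B|apply cts_C]; auto).
  unfold U1, A1, A3, Bq, Cq. field.
Qed.

Lemma exabs0 x : 0 <= x <= 1 -> ex_RInt (fun s => Rabs (G0 x s)) 0 1.
Proof.
  intros Hx. apply (piece_ex _ (fun s => Rabs (/ 6 * (s * (x - 1) * (x ^ 2 - 2 * x + s ^ 2))))
                       (fun s => Rabs (/ 6 * (x * (s - 1) * (s ^ 2 - 2 * s + x ^ 2)))) x Hx).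
  apply ctsR_abs, ctsR_der; intros; auto_derive; auto.
  apply ctsR_abs, ctsR_der; intros; auto_derive; auto.
  intros s Hs; unfold G0; destruct (Rle_dec s x); auto; lra.
  intros s Hs; unfold G0; destruct (Rle_dec s x); auto; lra.
Qed.
Lemma exabs1 x : 0 <= x <= 1 -> ex_RInt (fun s => Rabs (G1 x s)) 0 1.
Proof.
  intros Hx. apply (piece_ex _ (fun s => Rabs (/ 6 * (s * (3 * x ^ 2 - 6 * x + s ^ 2 + 2))))
                       (fun s => Rabs (/ 6 * ((s - 1) * (3 * x ^ 2 - 2 * s + s ^ 2)))) x Hx).
  apply ctsR_abs, ctsR_der; intros; auto_derive; auto.
  apply ctsR_abs, ctsR_der; intros; auto_derive; auto.
  intros s Hs; unfold G1; destruct (Rle_dec s x); auto; lra.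
  intros s Hs; unfold G1; destruct (Rle_dec s x); auto; lra.
Qed.

Lemma G0_bnd x s : 0 <= x <= 1 -> 0 <= s <= 1 -> Rabs (G0 x s) <= 2.
Proof.
  intros Hx Hs. unfold G0. apply Rabs_le. destruct (Rle_dec s x).
  - assert (0 <= s * (1 - x) <= 1) by nra. assert (-1 <= x^2 - 2*x + s^2 <= 1) by nra. split; nra.
  - assert (0 <= x * (1 - s) <= 1) by nra. assert (-1 <= s^2 - 2*s + x^2 <= 1) by nra. split; nra.
Qed.
Lemma G1_bnd x s : 0 <= x <= 1 -> 0 <= s <= 1 -> Rabs (G1 x s) <= 2.
Proof.
  intros Hx Hs. unfold G1. apply Rabs_le. destruct (Rle_dec s x).
  - assert (-4 <= 3 * x ^ 2 - 6 * x + s ^ 2 + 2 <= 4) by nra. split; nra.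
  - assert (-4 <= 3 * x ^ 2 - 2 * s + s ^ 2 <= 4) by nra. split; nra.
Qed.

Lemma mia_ge K B : (forall y, I01 y -> RInt (fun s => Rabs (K y s)) 0 1 <= B) ->
  forall x, I01 x -> RInt (fun s => Rabs (K x s)) 0 1 <= max_int_abs K.
Proof.
  intros HB x Hx. unfold max_int_abs.
  set (E := fun y => exists x, I01 x /\ y = RInt (fun s => Rabs (K x s)) 0 1).
  destruct (Lub_Rbar_correct E) as [ub lub].
  assert (Ex : E (RInt (fun s => Rabs (K x s)) 0 1)) by (exists x; auto).
  assert (L : Rbar_le (Lub_Rbar E) (Finite B)).
  { apply lub. intros y [z [Hz ->]]. simpl. apply HB; auto. }
  specialize (ub _ Ex).
  enough (H : RInt (fun s => Rabs (K x s)) 0 1 <= real (Lub_Rbar E)) by exact H.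
  destruct (Lub_Rbar E) as [r| |]; simpl in *; auto; contradiction.
Qed.

Lemma M0_ge x : I01 x -> RInt (fun s => Rabs (G0 x s)) 0 1 <= M0.
Proof.
  apply (mia_ge G0 2). intros y Hy. rewrite <- (RI_const01 2).
  apply RInt_le. lra. apply exabs0; auto. apply exRI_const.
  intros s Hs. apply G0_bnd; unfold I01 in *; lra.
Qed.
Lemma M1_ge x : I01 x -> RInt (fun s => Rabs (G1 x s)) 0 1 <= M1.
Proof.
  apply (mia_ge G1 2). intros y Hy. rewrite <- (RI_const01 2).
  apply RInt_le. lra. apply exabs1; auto. apply exRI_const.
  intros s Hs. apply G1_bnd; unfold I01 in *; lra.
Qed.
Lemma M0_pos : 0 <= M0.
Proof.
  apply Rle_trans with (RInt (fun s => Rabs (G0 0 s)) 0 1).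
  apply RInt_ge_0. lra. apply exabs0; lra. intros; apply Rabs_pos.
  apply M0_ge. unfold I01; lra.
Qed.
Lemma M1_pos : 0 <= M1.
Proof.
  apply Rle_trans with (RInt (fun s => Rabs (G1 0 s)) 0 1).
  apply RInt_ge_0. lra. apply exabs1; lra. intros; apply Rabs_pos.
  apply M1_ge. unfold I01; lra.
Qed.

Lemma U_bound g E x : ctsR g -> (forall s, 0 < s < 1 -> Rabs (g s) <= E) -> I01 x ->
  Rabs (U g x) <= M0 * E /\ Rabs (U1 g x) <= M1 * E.
Proof.
  intros Hg HE Hx.
  assert (E0 : 0 <= E) by (specialize (HE (1/2)); pose proof (Rabs_pos (g (1/2))); lra).
  destruct (green0 g x Hg Hx) as [ex0 eq0]. destruct (green1 g x Hg Hx) as [ex1 eq1].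
  split.
  - rewrite <- eq0. eapply Rle_trans. apply (int_bound _ (fun s => Rabs (G0 x s) * E)).
    exact ex0. apply exRI_scal_r. apply exabs0; auto.
    intros s Hs. rewrite Rabs_mult. apply Rmult_le_compat_l. apply Rabs_pos. auto.
    rewrite RI_scal_r by (apply exabs0; auto). apply Rmult_le_compat_r. auto. apply M0_ge; auto.
  - rewrite <- eq1. eapply Rle_trans. apply (int_bound _ (fun s => Rabs (G1 x s) * E)).
    exact ex1. apply exRI_scal_r. apply exabs1; auto.
    intros s Hs. rewrite Rabs_mult. apply Rmult_le_compat_l. apply Rabs_pos. auto.
    rewrite RI_scal_r by (apply exabs1; auto). apply Rmult_le_compat_r. auto. apply M1_ge; auto.
Qed.

Lemma A1_minus g1 g2 x : ctsR g1 -> ctsR g2 -> A1 (fun s => g1 s - g2 s) x = A1 g1 x - A1 g2 x.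
Proof. intros H1 H2. unfold A1. rewrite <- RI_minus by (apply ex_RInt_cts; apply cts_A1; auto).
  apply RInt_extR. intros; ring. Qed.
Lemma A3_minus g1 g2 x : ctsR g1 -> ctsR g2 -> A3 (fun s => g1 s - g2 s) x = A3 g1 x - A3 g2 x.
Proof. intros H1 H2. unfold A3. rewrite <- RI_minus by (apply ex_RInt_cts; apply cts_A3; auto).
  apply RInt_extR. intros; ring. Qed.
Lemma Bq_minus g1 g2 x : ctsR g1 -> ctsR g2 -> Bq (fun s => g1 s - g2 s) x = Bq g1 x - Bq g2 x.
Proof. intros H1 H2. unfold Bq. rewrite <- RI_minus by (apply ex_RInt_cts; apply cts_B; auto).
  apply RInt_extR. intros; ring. Qed.
Lemma Cq_minus g1 g2 x : ctsR g1 -> ctsR g2 -> Cq (fun s => g1 s - g2 s) x = Cq g1 x - Cq g2 x.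
Proof. intros H1 H2. unfold Cq. rewrite <- RI_minus by (apply ex_RInt_cts; apply cts_C; auto).
  apply RInt_extR. intros; ring. Qed.
Lemma U_minus g1 g2 x : ctsR g1 -> ctsR g2 -> U (fun s => g1 s - g2 s) x = U g1 x - U g2 x.
Proof. intros H1 H2. unfold U. rewrite A1_minus, A3_minus, Bq_minus, Cq_minus by auto. ring. Qed.
Lemma U1_minus g1 g2 x : ctsR g1 -> ctsR g2 -> U1 (fun s => g1 s - g2 s) x = U1 g1 x - U1 g2 x.
Proof. intros H1 H2. unfold U1. rewrite A1_minus, A3_minus, Bq_minus, Cq_minus by auto. ring. Qed.

Lemma U_ext g1 g2 x : (forall s, 0 < s < 1 -> g1 s = g2 s) -> I01 x ->
  U g1 x = U g2 x /\ U1 g1 x = U1 g2 x.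
Proof.
  intros H Hx. unfold I01 in Hx.
  assert (a1 : A1 g1 x = A1 g2 x).
  { unfold A1. apply RInt_extR. rewrite Rmin_left, Rmax_right by lra. intros s Hs. rewrite H; auto; lra. }
  assert (a3 : A3 g1 x = A3 g2 x).
  { unfold A3. apply RInt_extR. rewrite Rmin_left, Rmax_right by lra. intros s Hs. rewrite H; auto; lra. }
  assert (b : Bq g1 x = Bq g2 x).
  { unfold Bq. apply RInt_extR. rewrite Rmin_left, Rmax_right by lra. intros s Hs. rewrite H; auto; lra. }
  assert (c : Cq g1 x = Cq g2 x).
  { unfold Cq. apply RInt_extR. rewrite Rmin_left, Rmax_right by lra. intros s Hs. rewrite H; auto; lra. }
  unfold U, U1. rewrite a1, a3, b, c. auto.
Qed.

Definition clamp x := Rmax 0 (Rmin 1 x).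
Lemma clamp_I x : I01 (clamp x).
Proof. unfold clamp, I01, Rmax, Rmin. destruct (Rle_dec 1 x); destruct (Rle_dec 0 _); lra. Qed.
Lemma clamp_id x : I01 x -> clamp x = x.
Proof. unfold clamp, I01, Rmax, Rmin. intros. destruct (Rle_dec 1 x); destruct (Rle_dec 0 _); lra. Qed.
Lemma clamp_lip x y : Rabs (clamp y - clamp x) <= Rabs (y - x).
Proof. unfold clamp, Rmax, Rmin.
  destruct (Rle_dec 1 x); destruct (Rle_dec 1 y); destruct (Rle_dec 0 x); destruct (Rle_dec 0 y);
  destruct (Rle_dec 0 1); apply Rabs_le; pose proof (Rabs_le_between (y - x) (Rabs (y - x))) as [A _];
  specialize (A (Rle_refl _)); lra. Qed.

Lemma ctsR_clamp (h : R -> R) :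
  (forall x, I01 x -> forall eps, 0 < eps -> exists d, 0 < d /\ forall y, I01 y -> Rabs (y - x) < d -> Rabs (h y - h x) < eps) ->
  ctsR (fun t => h (clamp t)).
Proof.
  intros H x. apply cont_iff. intros e He. destruct (H (clamp x) (clamp_I x) e He) as [d [Hd H']].
  exists d. split; auto. intros y Hy. apply H'. apply clamp_I.
  eapply Rle_lt_trans. apply clamp_lip. auto.
Qed.

Lemma bnd01 (Q : R -> R -> Prop) :
  (forall T, I01 T -> exists d, 0 < d /\ exists B, forall x, I01 x -> Rabs (x - T) < d -> Q x B) ->
  (forall x B B', B <= B' -> Q x B -> Q x B') ->
  exists B, forall x, I01 x -> Q x B.
Proof.
  intros Hl Hm.
  assert (P1 : exists B, forall x, 0 <= x <= 1 -> Q x B).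
  { apply (real_ind (fun t => exists B, forall x, 0 <= x <= t -> Q x B)).
    - destruct (Hl 0) as [d [Hd [B HB]]]. unfold I01; lra. exists B. intros x Hx. apply HB. unfold I01; lra.
      replace (x - 0) with 0 by lra. rewrite Rabs_R0; auto.
    - intros T HT Hlt. destruct (Hl T) as [d [Hd [B1 HB1]]]. unfold I01; lra.
      destruct (Hlt (Rmax 0 (T - d/2))) as [B2 HB2]. split. apply Rmax_l. unfold Rmax; destruct (Rle_dec 0 (T - d/2)); lra.
      exists (Rmax B1 B2). intros x Hx. destruct (Rle_dec x (Rmax 0 (T - d/2))).
      + apply Hm with B2. apply Rmax_r. apply HB2. lra.
      + apply Hm with B1. apply Rmax_l. apply HB1. unfold I01; lra.
        assert (x > T - d/2) by (pose proof (Rmax_r 0 (T - d/2)); lra).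
        apply Rabs_lt_between'. lra.
    - intros T HT [B2 HB2]. destruct (Hl T) as [d [Hd [B1 HB1]]]. unfold I01; lra.
      exists d. split; auto. intros t Ht Ht1. exists (Rmax B1 B2). intros x Hx. destruct (Rle_dec x T).
      + apply Hm with B2. apply Rmax_r. apply HB2. lra.
      + apply Hm with B1. apply Rmax_l. apply HB1. unfold I01; lra. apply Rabs_lt_between'. lra. }
  destruct P1 as [B HB]. exists B. intros x Hx. apply HB. exact Hx.
Qed.

Lemma k_unif k : cont_on_square k -> forall x0, I01 x0 -> forall eps, 0 < eps ->
  exists d, 0 < d /\ forall x, I01 x -> Rabs (x - x0) < d -> forall s, I01 s -> Rabs (k x s - k x0 s) < eps.
Proof.
  intros Hk x0 Hx0 e He.
  assert (Loc : forall T, I01 T -> exists d1, 0 < d1 /\ forall x s, I01 x -> I01 s -> Rabs (x - x0) < d1 -> Rabs (s - T) < d1 ->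
     Rabs (k x s - k x0 s) < e).
  { intros T HT. destruct (Hk x0 T Hx0 HT (e/2)) as [d1 [Hd1 H1]]. lra. exists d1. split; auto.
    intros x s Hx Hs Hxd Hsd. pose proof (H1 x s Hx Hs Hxd Hsd). pose proof (H1 x0 s Hx0 Hs) as H2.
    rewrite Rminus_eq_0, Rabs_R0 in H2. specialize (H2 Hd1 Hsd).
    replace (k x s - k x0 s) with ((k x s - k x0 T) - (k x0 s - k x0 T)) by ring.
    eapply Rle_lt_trans. apply Rabs_triang. rewrite Rabs_Ropp. lra. }
  assert (P1 : exists d, 0 < d /\ forall x, I01 x -> Rabs (x - x0) < d -> forall s, I01 s -> s <= 1 -> Rabs (k x s - k x0 s) < e).
  { apply (real_ind (fun t => exists d, 0 < d /\ forall x, I01 x -> Rabs (x - x0) < d -> forall s, I01 s -> s <= t -> Rabs (k x s - k x0 s) < e)).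
    - destruct (Loc 0) as [d [Hd H]]. unfold I01; lra. exists d. split; auto. intros x Hx Hxd s Hs Hs0.
      apply H; auto. unfold I01 in Hs. replace (s - 0) with 0 by lra. rewrite Rabs_R0; auto.
    - intros T HT Hlt. destruct (Loc T) as [d1 [Hd1 H1]]. unfold I01; lra.
      destruct (Hlt (Rmax 0 (T - d1/2))) as [d2 [Hd2 H2]]. split. apply Rmax_l. unfold Rmax; destruct (Rle_dec 0 (T - d1/2)); lra.
      exists (Rmin d1 d2). split. apply Rmin_glb_lt; auto. intros x Hx Hxd s Hs HsT.
      assert (Rabs (x - x0) < d1) by (pose proof (Rmin_l d1 d2); lra).
      assert (Rabs (x - x0) < d2) by (pose proof (Rmin_r d1 d2); lra).
      destruct (Rle_dec s (Rmax 0 (T - d1/2))).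
      + apply H2; auto.
      + apply H1; auto. assert (s > T - d1/2) by (pose proof (Rmax_r 0 (T - d1/2)); lra). apply Rabs_lt_between'. lra.
    - intros T HT [d2 [Hd2 H2]]. destruct (Loc T) as [d1 [Hd1 H1]]. unfold I01; lra.
      exists d1. split; auto. intros t Ht Ht1. exists (Rmin d1 d2). split. apply Rmin_glb_lt; auto.
      intros x Hx Hxd s Hs Hst.
      assert (Rabs (x - x0) < d1) by (pose proof (Rmin_l d1 d2); lra).
      assert (Rabs (x - x0) < d2) by (pose proof (Rmin_r d1 d2); lra).
      destruct (Rle_dec s T).
      + apply H2; auto.
      + apply H1; auto. apply Rabs_lt_between'. lra. }
  destruct P1 as [d [Hd H]]. exists d. split; auto. intros x Hx Hxd s Hs. apply H; auto. apply Hs.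
Qed.

Lemma k_bnd k : cont_on_square k -> exists B, forall x s, I01 x -> I01 s -> Rabs (k x s) <= B.
Proof.
  intros Hk.
  assert (Inner : forall x0, I01 x0 -> exists B, forall s, I01 s -> Rabs (k x0 s) <= B).
  { intros x0 Hx0. apply (bnd01 (fun s B => Rabs (k x0 s) <= B)).
    - intros T HT. destruct (Hk x0 T Hx0 HT 1) as [d [Hd H]]. lra. exists d. split; auto.
      exists (Rabs (k x0 T) + 1). intros s Hs Hsd. specialize (H x0 s Hx0 Hs).
      rewrite Rminus_eq_0, Rabs_R0 in H. specialize (H Hd Hsd).
      pose proof (Rabs_triang_inv (k x0 s) (k x0 T)). lra.
    - intros; lra. }
  destruct (bnd01 (fun x B => forall s, I01 s -> Rabs (k x s) <= B)) as [B HB].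
  - intros T HT. destruct (k_unif k Hk T HT 1) as [d [Hd H]]. lra. exists d. split; auto.
    destruct (Inner T HT) as [B HB]. exists (B + 1). intros x Hx Hxd s Hs.
    specialize (H x Hx Hxd s Hs). specialize (HB s Hs).
    pose proof (Rabs_triang_inv (k x s) (k T s)). lra.
  - intros x B B' HBB H s Hs. specialize (H s Hs). lra.
  - exists B. intros x s Hx Hs. apply HB; auto.
Qed.

Lemma ctsR_mul f g : ctsR f -> ctsR g -> ctsR (fun s => f s * g s).
Proof. intros Hf Hg x. apply (@continuous_mult R_UniformSpace R_AbsRing f g x); auto. Qed.
Lemma ctsR_U g : ctsR g -> ctsR (U g).
Proof. intros Hg x. apply (@ex_derive_continuous R_AbsRing R_NormedModule). eexists. apply der_U; auto. Qed.
Lemma ctsR_U1 g : ctsR g -> ctsR (U1 g).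
Proof. intros Hg x. apply (@ex_derive_continuous R_AbsRing R_NormedModule). eexists. apply der_U1; auto. Qed.

Lemma ctsR_kc k x : cont_on_square k -> I01 x -> ctsR (fun t => k x (clamp t)).
Proof.
  intros Hk Hx. apply (ctsR_clamp (k x)). intros s Hs e He. destruct (Hk x s Hx Hs e He) as [d [Hd H]].
  exists d. split; auto. intros y Hy Hyd. apply H; auto. rewrite Rminus_eq_0, Rabs_R0; auto.
Qed.

Lemma ex_kv k x v : cont_on_square k -> I01 x -> ctsR v -> ex_RInt (fun t => k x t * v t) 0 1.
Proof.
  intros Hk Hx Hv. apply (ex_RInt_extR (fun t => k x (clamp t) * v t)).
  rewrite Rmin_left, Rmax_right by lra. intros t Ht. rewrite clamp_id; auto. unfold I01; lra.
  apply ex_RInt_cts. apply ctsR_mul; auto. apply ctsR_kc; auto.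
Qed.
Lemma ex_kabs k x : cont_on_square k -> I01 x -> ex_RInt (fun t => Rabs (k x t)) 0 1.
Proof.
  intros Hk Hx. apply (ex_RInt_extR (fun t => Rabs (k x (clamp t)))).
  rewrite Rmin_left, Rmax_right by lra. intros t Ht. rewrite clamp_id; auto. unfold I01; lra.
  apply ex_RInt_cts. apply ctsR_abs. apply ctsR_kc; auto.
Qed.

Lemma M2_ge k : cont_on_square k -> forall x, I01 x -> RInt (fun s => Rabs (k x s)) 0 1 <= M2 k.
Proof.
  intros Hk. destruct (k_bnd k Hk) as [B HB]. apply (mia_ge k B). intros y Hy.
  rewrite <- (RI_const01 B). apply RInt_le. lra. apply ex_kabs; auto. apply exRI_const.
  intros s Hs. apply HB; auto. unfold I01; lra.
Qed.
Lemma M2_pos k : cont_on_square k -> 0 <= M2 k.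
Proof.
  intros Hk. apply Rle_trans with (RInt (fun s => Rabs (k 0 s)) 0 1).
  apply RInt_ge_0. lra. apply ex_kabs; auto. unfold I01; lra. intros; apply Rabs_pos.
  apply M2_ge; auto. unfold I01; lra.
Qed.

Definition Zv (k : R -> R -> R) (v : R -> R) x := RInt (fun t => k x t * v t) 0 1.

Lemma Zv_bound k v c x : cont_on_square k -> ctsR v -> (forall t, I01 t -> Rabs (v t) <= c) -> I01 x ->
  Rabs (Zv k v x) <= M2 k * c.
Proof.
  intros Hk Hv Hc Hx. assert (c0 : 0 <= c) by (pose proof (Hc 0 ltac:(unfold I01; lra)); pose proof (Rabs_pos (v 0)); lra).
  unfold Zv. eapply Rle_trans. apply (int_bound _ (fun t => Rabs (k x t) * c)).
  apply ex_kv; auto. apply exRI_scal_r. apply ex_kabs; auto.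
  intros s Hs. rewrite Rabs_mult. apply Rmult_le_compat_l. apply Rabs_pos. apply Hc. unfold I01; lra.
  rewrite RI_scal_r by (apply ex_kabs; auto). rewrite Rmult_comm, (Rmult_comm (M2 k)).
  apply Rmult_le_compat_l; auto. apply M2_ge; auto.
Qed.

Lemma Zv_minus k v1 v2 x : cont_on_square k -> ctsR v1 -> ctsR v2 -> I01 x ->
  Zv k v1 x - Zv k v2 x = Zv k (fun t => v1 t - v2 t) x.
Proof.
  intros Hk H1 H2 Hx. unfold Zv. rewrite <- RI_minus by (apply ex_kv; auto). apply RInt_extR. intros; ring.
Qed.

Lemma Zv_cont k v c : cont_on_square k -> ctsR v -> (forall t, I01 t -> Rabs (v t) <= c) ->
  forall x0, I01 x0 -> forall eps, 0 < eps -> exists d, 0 < d /\ forall x, I01 x -> Rabs (x - x0) < d ->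
  Rabs (Zv k v x - Zv k v x0) < eps.
Proof.
  intros Hk Hv Hc x0 Hx0 e He.
  assert (c0 : 0 <= c) by (pose proof (Hc 0 ltac:(unfold I01; lra)); pose proof (Rabs_pos (v 0)); lra).
  destruct (k_unif k Hk x0 Hx0 (e / (2 * (c + 1)))) as [d [Hd H]].
  apply Rdiv_lt_0_compat; lra.
  exists d. split; auto. intros x Hx Hxd. unfold Zv. rewrite <- RI_minus by (apply ex_kv; auto).
  apply Rle_lt_trans with (RInt (fun _ => e / (2 * (c + 1)) * c) 0 1).
  - apply int_bound. apply exRI_minus; apply ex_kv; auto. apply exRI_const.
    intros s Hs. replace (k x s * v s - k x0 s * v s) with ((k x s - k x0 s) * v s) by ring.
    rewrite Rabs_mult. apply Rmult_le_compat. apply Rabs_pos. apply Rabs_pos.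
    left. apply H; auto. unfold I01; lra. apply Hc. unfold I01; lra.
  - rewrite RI_const01. apply Rlt_le_trans with (e / 2). 
    unfold Rdiv. rewrite Rinv_mult. 
    assert (0 < / (c+1)) by (apply Rinv_0_lt_compat; lra).
    assert (c * / (c+1) < 1) by (apply (Rmult_lt_reg_r (c+1)); [lra|]; rewrite Rmult_assoc, Rinv_l by lra; lra).
    assert (0 <= c * / (c+1)) by (apply Rmult_le_pos; lra).
    replace (e * (/ 2 * / (c + 1)) * c) with (e * / 2 * (c * / (c+1))) by ring.
    assert (0 < e * / 2) by lra.
    replace (e * / 2) with (e * / 2 * 1) at 2 by ring. apply Rmult_lt_compat_l; auto.
    lra.
Qed.

Definition Ph k (f : R -> R -> R -> R -> R) g x :=
  f (clamp x) (U g (clamp x)) (U1 g (clamp x)) (Zv k (U g) (clamp x)).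

Definition gbnd (g : R -> R) E := forall s, 0 < s < 1 -> Rabs (g s) <= E.

Lemma U_bnd_I g M x : ctsR g -> gbnd g M -> I01 x -> Rabs (U g x) <= M0 * M.
Proof. intros. apply (U_bound g M x); auto. Qed.

Lemma DM_of k M g x : cont_on_square k -> ctsR g -> gbnd g M -> I01 x ->
  DM k M x (U g x) (U1 g x) (Zv k (U g) x).
Proof.
  intros Hk Hg HM Hx. destruct (U_bound g M x Hg HM Hx) as [B0 B1].
  unfold DM. split; auto. split; auto. split; auto.
  replace (M0 * M2 k * M) with (M2 k * (M0 * M)) by ring.
  apply Zv_bound; auto. apply ctsR_U; auto. intros t Ht. apply U_bnd_I; auto.
Qed.

Lemma Ph_bnd k f M g x : cont_on_square k -> (forall x u v z, DM k M x u v z -> Rabs (f x u v z) <= M) ->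
  ctsR g -> gbnd g M -> Rabs (Ph k f g x) <= M.
Proof. intros Hk Hf Hg HM. unfold Ph. apply Hf. apply DM_of; auto. apply clamp_I. Qed.

Lemma Ph_cts k f M g : cont_on_square k -> cont_on4 f (DM k M) -> ctsR g -> gbnd g M -> ctsR (Ph k f g).
Proof.
  intros Hk Hf Hg HM. unfold Ph.
  apply (ctsR_clamp (fun y => f y (U g y) (U1 g y) (Zv k (U g) y))).
  intros x Hx e He.
  destruct (Hf x _ _ _ (DM_of k M g x Hk Hg HM Hx) e He) as [d0 [Hd0 H0]].
  destruct (proj1 (cont_iff (U g) x) (ctsR_U g Hg x) d0 Hd0) as [d1 [Hd1 H1]].
  destruct (proj1 (cont_iff (U1 g) x) (ctsR_U1 g Hg x) d0 Hd0) as [d2 [Hd2 H2]].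
  destruct (Zv_cont k (U g) (M0 * M) Hk (ctsR_U g Hg) (fun t Ht => U_bnd_I g M t Hg HM Ht) x Hx d0 Hd0) as [d3 [Hd3 H3]].
  exists (Rmin (Rmin d0 d1) (Rmin d2 d3)). split.
  repeat apply Rmin_glb_lt; auto.
  intros y Hy Hyd.
  pose proof (Rmin_l (Rmin d0 d1) (Rmin d2 d3)). pose proof (Rmin_r (Rmin d0 d1) (Rmin d2 d3)).
  pose proof (Rmin_l d0 d1). pose proof (Rmin_r d0 d1). pose proof (Rmin_l d2 d3). pose proof (Rmin_r d2 d3).
  apply H0. apply DM_of; auto. lra. apply H1; lra. apply H2; lra. apply H3; auto; lra.
Qed.

Lemma Ph_contr k f M L0 L1 L2 g1 g2 E x : cont_on_square k -> 0 <= L0 -> 0 <= L1 -> 0 <= L2 ->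
  (forall x1 u1 v1 z1 x2 u2 v2 z2, DM k M x1 u1 v1 z1 -> DM k M x2 u2 v2 z2 ->
     Rabs (f x2 u2 v2 z2 - f x1 u1 v1 z1)
       <= L0 * Rabs (u2 - u1) + L1 * Rabs (v2 - v1) + L2 * Rabs (z2 - z1)) ->
  ctsR g1 -> ctsR g2 -> gbnd g1 M -> gbnd g2 M ->
  gbnd (fun s => g1 s - g2 s) E ->
  Rabs (Ph k f g1 x - Ph k f g2 x) <= (L0 * M0 + L1 * M1 + L2 * M0 * M2 k) * E.
Proof.
  intros Hk HL0 HL1 HL2 Hf H1 H2 B1 B2 HE. unfold Ph. set (y := clamp x).
  assert (Hy : I01 y) by apply clamp_I.
  eapply Rle_trans. apply Hf; apply DM_of; auto.
  assert (Hd : ctsR (fun s => g1 s - g2 s)) by (apply ctsR_minus; auto).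
  destruct (U_bound _ E y Hd HE Hy) as [Ba Bb].
  rewrite U_minus in Ba by auto. rewrite U1_minus in Bb by auto.
  assert (Bc : Rabs (Zv k (U g1) y - Zv k (U g2) y) <= M2 k * (M0 * E)).
  { rewrite Zv_minus; auto. apply Zv_bound; auto. apply ctsR_minus; apply ctsR_U; auto.
    intros t Ht. rewrite <- U_minus by auto. apply (U_bound _ E t Hd HE Ht). apply ctsR_U; auto. apply ctsR_U; auto. }
  assert (L0 * Rabs (U g1 y - U g2 y) <= L0 * (M0 * E)) by (apply Rmult_le_compat_l; auto).
  assert (L1 * Rabs (U1 g1 y - U1 g2 y) <= L1 * (M1 * E)) by (apply Rmult_le_compat_l; auto).
  assert (L2 * Rabs (Zv k (U g1) y - Zv k (U g2) y) <= L2 * (M2 k * (M0 * E))) by (apply Rmult_le_compat_l; auto).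
  lra.
Qed.

Lemma geo_small q : 0 <= q < 1 -> forall y, 0 < y -> exists N, forall n, (N <= n)%nat -> q ^ n < y.
Proof.
  intros Hq y Hy. destruct (pow_lt_1_zero q) with y as [N HN]. rewrite Rabs_pos_eq; lra. auto.
  exists N. intros n Hn. specialize (HN n Hn). rewrite Rabs_pos_eq in HN; auto. apply pow_le; lra.
Qed.

Lemma geo_zero q a K : 0 <= q < 1 -> 0 <= K -> (forall n, Rabs a <= K * q ^ n) -> a = 0.
Proof.
  intros Hq HK H. destruct (Req_dec a 0) as [e|ne]; auto. exfalso.
  assert (Ha : 0 < Rabs a) by (apply Rabs_pos_lt; auto).
  destruct (geo_small q Hq (Rabs a / (K + 1))) as [N HN]. apply Rdiv_lt_0_compat; lra.
  specialize (HN N (Nat.le_refl N)). specialize (H N).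
  assert (K * q ^ N <= (K + 1) * q ^ N) by (apply Rmult_le_compat_r; [apply pow_le; lra | lra]).
  assert ((K + 1) * q ^ N < Rabs a).
  { apply (Rmult_lt_compat_l (K+1)) in HN; [|lra]. unfold Rdiv in HN.
    replace ((K + 1) * (Rabs a * / (K + 1))) with (Rabs a) in HN by (field; lra). lra. }
  lra.
Qed.

Lemma geo_lim (hs : nat -> R -> R) C q : 0 <= q < 1 -> 0 <= C ->
  (forall n p x, Rabs (hs (p + n)%nat x - hs n x) <= C * q ^ n) ->
  exists h : R -> R, forall n x, Rabs (h x - hs n x) <= C * q ^ n.
Proof.
  intros Hq HC H.
  assert (Ex : forall x, ex_finite_lim_seq (fun n => hs n x)).
  { intros x. apply ex_lim_seq_cauchy_corr. intros e.
    destruct (geo_small q Hq (e / (2 * C + 1))) as [N HN]. apply Rdiv_lt_0_compat. apply cond_pos. lra.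
    exists N. intros n m Hn Hm.
    pose proof (H N (n - N)%nat x) as A. pose proof (H N (m - N)%nat x) as B.
    replace (n - N + N)%nat with n in A by lia. replace (m - N + N)%nat with m in B by lia.
    specialize (HN N (Nat.le_refl N)).
    assert (C * q ^ N <= e / (2 * C + 1) * C).
    { rewrite Rmult_comm. apply Rmult_le_compat_r; lra. }
    assert (e / (2 * C + 1) * C * 2 < e).
    { unfold Rdiv. replace (e * / (2 * C + 1) * C * 2) with (e * (2 * C / (2 * C + 1))) by (field; lra).
      pose proof (cond_pos e).
      assert (2 * C / (2 * C + 1) < 1). { apply (Rmult_lt_reg_r (2 * C + 1)). lra. unfold Rdiv. rewrite Rmult_assoc, Rinv_l by lra. lra. }
      replace (pos e) with (e * 1) at 2 by ring. apply Rmult_lt_compat_l; lra. }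
    replace (hs n x - hs m x) with ((hs n x - hs N x) - (hs m x - hs N x)) by ring.
    eapply Rle_lt_trans. apply Rabs_triang. rewrite Rabs_Ropp. lra. }
  exists (fun x => real (Lim_seq (fun n => hs n x))). intros n x.
  destruct (Ex x) as [l Hl]. rewrite (is_lim_seq_unique _ _ Hl). simpl.
  assert (Hs : is_lim_seq (fun m => hs (m + n)%nat x) l) by (apply (is_lim_seq_incr_n (fun m => hs m x) n l); auto).
  apply Rabs_le. split.
  - pose proof (is_lim_seq_le (fun _ => hs n x - C * q ^ n) (fun m => hs (m + n)%nat x) (hs n x - C * q ^ n) l) as L.
    simpl in L. assert (hs n x - C * q ^ n <= l). apply L. intros m. specialize (H n m x). apply Rabs_le_between in H. lra.
    apply is_lim_seq_const. auto. lra.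
  - pose proof (is_lim_seq_le (fun m => hs (m + n)%nat x) (fun _ => hs n x + C * q ^ n) l (hs n x + C * q ^ n)) as L.
    simpl in L. assert (l <= hs n x + C * q ^ n). apply L. intros m. specialize (H n m x). apply Rabs_le_between in H. lra.
    auto. apply is_lim_seq_const. lra.
Qed.

Fixpoint iterPh k f n : R -> R :=
  match n with O => fun _ => 0 | S n => Ph k f (iterPh k f n) end.

Lemma geo_le q a K : 0 <= q < 1 -> 0 <= K -> (forall n, a <= K * q ^ n) -> a <= 0.
Proof.
  intros Hq HK H. destruct (Rle_dec a 0) as [Hle|Hnle]; auto. exfalso.
  assert (a = 0). { apply (geo_zero q a K Hq HK). intros n. rewrite Rabs_pos_eq by lra. auto. } lra.
Qed.

Lemma fixpt k f M L0 L1 L2 :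
  cont_on_square k ->
  0 < M -> 0 <= L0 -> 0 <= L1 -> 0 <= L2 ->
  cont_on4 f (DM k M) ->
  (forall x u v z, DM k M x u v z -> Rabs (f x u v z) <= M) ->
  (forall x1 u1 v1 z1 x2 u2 v2 z2, DM k M x1 u1 v1 z1 -> DM k M x2 u2 v2 z2 ->
     Rabs (f x2 u2 v2 z2 - f x1 u1 v1 z1)
       <= L0 * Rabs (u2 - u1) + L1 * Rabs (v2 - v1) + L2 * Rabs (z2 - z1)) ->
  L0 * M0 + L1 * M1 + L2 * M0 * M2 k < 1 ->
  exists h, ctsR h /\ (forall x, Rabs (h x) <= M) /\ (forall x, Ph k f h x = h x).
Proof.
  intros Hk HM HL0 HL1 HL2 Hc Hb Hl Hq1.
  set (q := L0 * M0 + L1 * M1 + L2 * M0 * M2 k) in *.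
  assert (Hq0 : 0 <= q).
  { unfold q. pose proof M0_pos. pose proof M1_pos. pose proof (M2_pos k Hk).
    assert (0 <= L0 * M0) by (apply Rmult_le_pos; auto).
    assert (0 <= L1 * M1) by (apply Rmult_le_pos; auto).
    assert (0 <= L2 * M0 * M2 k) by (repeat apply Rmult_le_pos; auto). lra. }
  assert (Hq : 0 <= q < 1) by lra.
  set (hs := iterPh k f).
  assert (Inv : forall n, ctsR (hs n) /\ forall x, Rabs (hs n x) <= M).
  { intros n; induction n as [|n [IH1 IH2]].
    - split. apply ctsR_const. intros x. unfold hs; simpl. rewrite Rabs_R0. lra.
    - split. apply (Ph_cts k f M); auto. intros s Hs; auto.
      intros x. apply (Ph_bnd k f M); auto. intros s Hs; auto. }
  assert (Diff : forall n x, Rabs (hs (S n) x - hs n x) <= M * q ^ n).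
  { intros n; induction n as [|n IH].
    - intros x. unfold hs; simpl. rewrite Rminus_0_r. rewrite Rmult_1_r. apply (Ph_bnd k f M); auto. apply ctsR_const.
      intros s Hs. simpl. rewrite Rabs_R0. lra.
    - intros x. change (Rabs (Ph k f (hs (S n)) x - Ph k f (hs n) x) <= M * q ^ S n).
      eapply Rle_trans. apply (Ph_contr k f M L0 L1 L2 (hs (S n)) (hs n) (M * q ^ n)); auto; try apply Inv.
      intros s Hs; apply Inv. intros s Hs; apply Inv. intros s Hs; apply IH.
      fold q. simpl. lra. }
  set (C := M / (1 - q)).
  assert (HC : 0 <= C) by (unfold C; apply Rmult_le_pos; [lra | left; apply Rinv_0_lt_compat; lra]).
  assert (Tele : forall n p x, Rabs (hs (p + n)%nat x - hs n x) <= C * q ^ n).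
  { intros n p x. assert (A : Rabs (hs (p + n)%nat x - hs n x) <= M * q ^ n * (1 - q ^ p) / (1 - q)).
    { induction p as [|p IH].
      - simpl. rewrite Rminus_eq_0, Rabs_R0. replace (M * q ^ n * (1 - 1) / (1 - q)) with 0 by (field; lra). lra.
      - simpl (S p + n)%nat. replace (hs (S (p + n)) x - hs n x) with ((hs (S (p + n)) x - hs (p + n)%nat x) + (hs (p + n)%nat x - hs n x)) by ring.
        eapply Rle_trans. apply Rabs_triang. pose proof (Diff (p + n)%nat x). rewrite pow_add in H.
        replace (M * q ^ n * (1 - q ^ S p) / (1 - q)) with (M * (q ^ p * q ^ n) + M * q ^ n * (1 - q ^ p) / (1 - q))
          by (simpl; field; lra). lra. }
    eapply Rle_trans. apply A. unfold C. unfold Rdiv.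
    replace (M * / (1 - q) * q ^ n) with (M * q ^ n * 1 * / (1 - q)) by ring.
    apply Rmult_le_compat_r. left; apply Rinv_0_lt_compat; lra.
    apply Rmult_le_compat_l. apply Rmult_le_pos. lra. apply pow_le; lra.
    pose proof (pow_le q p (proj1 Hq)). lra. }
  destruct (geo_lim hs C q Hq HC Tele) as [h Hh].
  assert (Hbh : forall x, Rabs (h x) <= M).
  { intros x. assert (Rabs (h x) - M <= 0). apply (geo_le q _ C Hq HC). intros n.
    specialize (Hh n x). destruct (Inv n) as [_ B]. specialize (B x).
    pose proof (Rabs_triang_inv (h x) (hs n x)). lra. lra. }
  assert (Hch : ctsR h).
  { intros x. apply cont_iff. intros e He.
    destruct (geo_small q Hq (e / (3 * (C + 1)))) as [N HN]. apply Rdiv_lt_0_compat; lra.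
    specialize (HN N (Nat.le_refl N)).
    destruct (proj1 (cont_iff (hs N) x) (proj1 (Inv N) x) (e/3)) as [d [Hd H]]. lra.
    exists d. split; auto. intros y Hy. specialize (H y Hy).
    assert (C * q ^ N < e / 3).
    { apply Rle_lt_trans with ((C + 1) * q ^ N). apply Rmult_le_compat_r. apply pow_le; lra. lra.
      apply (Rmult_lt_compat_l (C + 1)) in HN; [|lra]. unfold Rdiv in HN |- *.
      replace ((C + 1) * (e * / (3 * (C + 1)))) with (e * / 3) in HN by (field; lra). lra. }
    pose proof (Hh N x). pose proof (Hh N y).
    replace (h y - h x) with ((h y - hs N y) + (hs N y - hs N x) - (h x - hs N x)) by ring.
    eapply Rle_lt_trans. apply Rabs_triang. eapply Rle_lt_trans. apply Rplus_le_compat_r. apply Rabs_triang.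
    rewrite Rabs_Ropp. lra. }
  exists h. split; auto. split; auto.
  intros x. apply Rminus_diag_uniq. apply (geo_zero q _ (2 * C) Hq ltac:(lra)). intros n.
  assert (A : Rabs (Ph k f h x - Ph k f (hs n) x) <= q * (C * q ^ n)).
  { apply (Ph_contr k f M L0 L1 L2); auto. apply Inv. intros s Hs; auto. intros s Hs; apply Inv.
    intros s Hs. apply Hh. }
  assert (B : Rabs (hs (S n) x - h x) <= C * q ^ S n) by (rewrite Rabs_minus_sym; apply Hh).
  change (hs (S n) x) with (Ph k f (hs n) x) in B.
  replace (Ph k f h x - h x) with ((Ph k f h x - Ph k f (hs n) x) + (Ph k f (hs n) x - h x)) by ring.
  eapply Rle_trans. apply Rabs_triang.
  assert (q ^ S n <= q ^ n) by (simpl; pose proof (pow_le q n (proj1 Hq)); nra).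
  assert (C * q ^ S n <= C * q ^ n) by (apply Rmult_le_compat_l; auto).
  assert (0 <= C * q ^ n) by (apply Rmult_le_pos; auto; apply pow_le; lra).
  assert (q * (C * q ^ n) <= C * q ^ n) by nra.
  lra.
Qed.

Lemma fix_uniq k f M L0 L1 L2 g h :
  cont_on_square k -> 0 < M -> 0 <= L0 -> 0 <= L1 -> 0 <= L2 ->
  (forall x1 u1 v1 z1 x2 u2 v2 z2, DM k M x1 u1 v1 z1 -> DM k M x2 u2 v2 z2 ->
     Rabs (f x2 u2 v2 z2 - f x1 u1 v1 z1)
       <= L0 * Rabs (u2 - u1) + L1 * Rabs (v2 - v1) + L2 * Rabs (z2 - z1)) ->
  L0 * M0 + L1 * M1 + L2 * M0 * M2 k < 1 ->
  ctsR g -> ctsR h -> gbnd g M -> gbnd h M ->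
  (forall s, 0 < s < 1 -> Ph k f g s = g s) -> (forall s, 0 < s < 1 -> Ph k f h s = h s) ->
  forall s, 0 < s < 1 -> g s = h s.
Proof.
  intros Hk HM HL0 HL1 HL2 Hl Hq1 Hg Hh Bg Bh Fg Fh.
  set (q := L0 * M0 + L1 * M1 + L2 * M0 * M2 k) in *.
  assert (Hq0 : 0 <= q).
  { unfold q. pose proof M0_pos. pose proof M1_pos. pose proof (M2_pos k Hk).
    assert (0 <= L0 * M0) by (apply Rmult_le_pos; auto).
    assert (0 <= L1 * M1) by (apply Rmult_le_pos; auto).
    assert (0 <= L2 * M0 * M2 k) by (repeat apply Rmult_le_pos; auto). lra. }
  assert (Hq : 0 <= q < 1) by lra.
  assert (N : forall n, gbnd (fun s => g s - h s) (2 * M * q ^ n)).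
  { intros n; induction n as [|n IH].
    - intros s Hs. simpl. specialize (Bg s Hs). specialize (Bh s Hs).
      pose proof (Rabs_triang (g s) (- h s)). rewrite Rabs_Ropp in H. unfold Rminus. lra.
    - intros s Hs. rewrite <- (Fg s Hs), <- (Fh s Hs).
      eapply Rle_trans. apply (Ph_contr k f M L0 L1 L2 g h (2 * M * q ^ n)); auto.
      fold q. simpl. lra. }
  intros s Hs. apply Rminus_diag_uniq. apply (geo_zero q _ (2 * M) Hq ltac:(lra)). intros n. apply N; auto.
Qed.

Lemma deriv01_of_derive F F' : (forall x, is_derive F x (F' x)) -> is_deriv01 F F'.
Proof.
  intros H. apply deriv01_iff. intros x Hx e He.
  pose proof (proj1 (is_derive_Reals F x (F' x)) (H x) e He) as [d Hd].
  exists d. split. apply cond_pos. intros y Hy Hyx Hyd.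
  specialize (Hd (y - x)). replace (x + (y - x)) with y in Hd by ring. apply Hd. lra. auto.
Qed.

Lemma cont01_of_ctsR g : ctsR g -> cont01 g.
Proof.
  intros H. apply cont01_iff. intros x Hx e He. destruct (proj1 (cont_iff g x) (H x) e He) as [d [Hd H']].
  exists d. split; auto.
Qed.

Lemma dq_bound a b y x e : y <> x -> Rabs ((a - b) / (y - x)) < e -> Rabs (a - b) <= e * Rabs (y - x).
Proof.
  intros Hyx H. replace (a - b) with ((a - b) / (y - x) * (y - x)) by (field; lra).
  rewrite Rabs_mult. apply Rmult_le_compat_r. apply Rabs_pos. lra.
Qed.

Lemma zero_diff F F' G G' : is_deriv01 F F' -> is_deriv01 G G' -> (forall x, I01 x -> F' x = G' x) ->
  forall x, I01 x -> F x - G x = F 0 - G 0.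
Proof.
  intros HF HG HE.
  rewrite deriv01_iff in HF, HG.
  set (D := fun x => F x - G x).
  assert (Loc : forall T, I01 T -> forall e, 0 < e -> exists d, 0 < d /\ forall z, I01 z -> Rabs (z - T) < d ->
     Rabs (D z - D T) <= e * Rabs (z - T)).
  { intros T HT e He. destruct (HF T HT (e/2)) as [d1 [Hd1 H1]]. lra. destruct (HG T HT (e/2)) as [d2 [Hd2 H2]]. lra.
    exists (Rmin d1 d2). split. apply Rmin_glb_lt; auto. intros z Hz Hzd.
    destruct (Req_dec z T) as [->|ne]. unfold D. rewrite !Rminus_eq_0, Rabs_R0. lra.
    apply (dq_bound _ _ z T e ne).
    assert (A := H1 z Hz ne ltac:(pose proof (Rmin_l d1 d2); lra)).
    assert (B := H2 z Hz ne ltac:(pose proof (Rmin_r d1 d2); lra)).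
    rewrite (HE T HT) in A.
    replace ((D z - D T) / (z - T)) with (((F z - F T) / (z - T) - G' T) - ((G z - G T) / (z - T) - G' T))
      by (unfold D; field; lra).
    eapply Rle_lt_trans. apply Rabs_triang. rewrite Rabs_Ropp. lra. }
  assert (Main : forall e, 0 < e -> forall x, I01 x -> Rabs (D x - D 0) <= e * x).
  { intros e He.
    assert (P1 : forall y, 0 <= y <= 1 -> Rabs (D y - D 0) <= e * y).
    { apply (real_ind (fun t => forall y, 0 <= y <= t -> Rabs (D y - D 0) <= e * y)).
      - intros y Hy. replace y with 0 by lra. rewrite Rminus_eq_0, Rabs_R0. lra.
      - intros T HT Hlt y Hy. destruct (Req_dec y T) as [->|ne].
        + destruct (Loc T ltac:(unfold I01; lra) e He) as [d [Hd H]].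
          set (z := Rmax 0 (T - d/2)).
          assert (Hz : 0 <= z < T) by (unfold z, Rmax; destruct (Rle_dec 0 (T - d/2)); lra).
          assert (Hzd : Rabs (z - T) < d) by (apply Rabs_lt_between'; unfold z, Rmax; destruct (Rle_dec 0 (T - d/2)); lra).
          specialize (H z ltac:(unfold I01; lra) Hzd).
          specialize (Hlt z Hz z ltac:(lra)).
          replace (Rabs (z - T)) with (T - z) in H by (rewrite Rabs_minus_sym; symmetry; apply Rabs_pos_eq; lra).
          rewrite Rabs_minus_sym in H.
          replace (D T - D 0) with ((D T - D z) + (D z - D 0)) by ring.
          eapply Rle_trans. apply Rabs_triang. lra.
        + apply (Hlt y); lra.
      - intros T HT PT. destruct (Loc T ltac:(unfold I01; lra) e He) as [d [Hd H]].
        exists d. split; auto. intros t Ht Ht1 y Hy. destruct (Rle_dec y T). apply PT; lra.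
        specialize (H y ltac:(unfold I01; lra) ltac:(apply Rabs_lt_between'; lra)).
        rewrite (Rabs_pos_eq (y - T)) in H by lra. specialize (PT T ltac:(lra)).
        replace (D y - D 0) with ((D y - D T) + (D T - D 0)) by ring.
        eapply Rle_trans. apply Rabs_triang. lra. }
    intros x Hx. apply P1. exact Hx. }
  intros x Hx. apply Rminus_diag_uniq.
  destruct (Req_dec (D x - D 0) 0) as [e|ne]. unfold D in e. lra. exfalso.
  assert (Hp : 0 < Rabs (D x - D 0)) by (apply Rabs_pos_lt; auto).
  specialize (Main (Rabs (D x - D 0) / 2) ltac:(lra) x Hx). unfold I01 in Hx.
  assert (Rabs (D x - D 0) / 2 * x <= Rabs (D x - D 0) / 2) by (rewrite <- (Rmult_1_r (Rabs (D x - D 0) / 2)) at 2; apply Rmult_le_compat_l; lra).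
  lra.
Qed.

Lemma der_lin P P' c x : is_derive P x P' -> is_derive (fun y => P y + c * y) x (P' + c).
Proof.
  intros H. apply (is_derive_plus P (fun y => c * y) x P' c H).
  assert (E : is_derive (fun y : R => c * y) x c) by (auto_derive; auto; ring). exact E.
Qed.

Theorem theorem1 (k : R -> R -> R) (f : R -> R -> R -> R -> R)
  (M L0 L1 L2 : R) :
  cont_on_square k ->
  0 < M -> 0 <= L0 -> 0 <= L1 -> 0 <= L2 ->
  cont_on4 f (DM k M) ->
  (forall x u v z, DM k M x u v z -> Rabs (f x u v z) <= M) ->
  (forall x1 u1 v1 z1 x2 u2 v2 z2, DM k M x1 u1 v1 z1 -> DM k M x2 u2 v2 z2 ->
     Rabs (f x2 u2 v2 z2 - f x1 u1 v1 z1)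
       <= L0 * Rabs (u2 - u1) + L1 * Rabs (v2 - v1) + L2 * Rabs (z2 - z1)) ->
  L0 * M0 + L1 * M1 + L2 * M0 * M2 k < 1 ->
  (exists u u1 u2 u3 u4, is_solution f k M u u1 u2 u3 u4 /\
     forall w w1 w2 w3 w4, is_solution f k M w w1 w2 w3 w4 ->
       forall x, I01 x -> w x = u x).
Proof.
  intros Hk HM HL0 HL1 HL2 Hc Hb Hl Hq.
  destruct (fixpt k f M L0 L1 L2 Hk HM HL0 HL1 HL2 Hc Hb Hl Hq) as [h [Hch [Hbh Hfh]]].
  assert (Gh : gbnd h M) by (intros s Hs; auto).
  exists (U h), (U1 h), (U2 h), (U3 h), h. split.
  - unfold is_solution, C4_01. split.
    { split. apply deriv01_of_derive. intros; apply der_U; auto.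
      split. apply deriv01_of_derive. intros; apply der_U1; auto.
      split. apply deriv01_of_derive. intros; apply der_U2; auto.
      split. apply deriv01_of_derive. intros; apply der_U3; auto.
      apply cont01_of_ctsR; auto. }
    split.
    { intros x Hx. rewrite <- (Hfh x). unfold Ph. rewrite clamp_id by (unfold I01; lra). reflexivity. }
    split. apply U_0. split. apply U_1. split. apply U2_0. split. apply U2_1.
    intros x Hx. apply U_bound; auto.
  - intros w w1 w2 w3 w4 [[D0 [D1 [D2 [D3 C4]]]] [ODE [B0 [B1 [B20 [B21 Bnd]]]]]].
    set (g := fun t => w4 (clamp t)).
    assert (Hg : ctsR g) by (apply ctsR_clamp; apply cont01_iff; auto).
    assert (gI : forall x, I01 x -> g x = w4 x) by (intros; unfold g; rewrite clamp_id; auto).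
    assert (Ea := zero_diff w3 w4 (U3 g) g D3 (deriv01_of_derive _ _ (fun x => der_U3 g x Hg))
                   (fun x Hx => eq_sym (gI x Hx))).
    set (c3 := w3 0 - U3 g 0) in Ea.
    assert (Eb := zero_diff w2 w3 (fun x => U2 g x + c3 * x) (fun x => U3 g x + c3) D2
                   (deriv01_of_derive _ _ (fun x => der_lin _ _ c3 x (der_U2 g x Hg)))
                   (fun x Hx => ltac:(specialize (Ea x Hx); lra))).
    rewrite B20, U2_0 in Eb.
    assert (c30 : c3 = 0).
    { specialize (Eb 1 ltac:(unfold I01; lra)). rewrite B21, U2_1 in Eb. lra. }
    assert (W2 : forall x, I01 x -> w2 x = U2 g x).
    { intros x Hx. specialize (Eb x Hx). rewrite c30 in Eb. lra. }
    assert (Ec := zero_diff w1 w2 (U1 g) (U2 g) D1 (deriv01_of_derive _ _ (fun x => der_U1 g x Hg)) W2).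
    set (c1 := w1 0 - U1 g 0) in Ec.
    assert (Ed := zero_diff w w1 (fun x => U g x + c1 * x) (fun x => U1 g x + c1) D0
                   (deriv01_of_derive _ _ (fun x => der_lin _ _ c1 x (der_U g x Hg)))
                   (fun x Hx => ltac:(specialize (Ec x Hx); lra))).
    rewrite B0, U_0 in Ed.
    assert (c10 : c1 = 0).
    { specialize (Ed 1 ltac:(unfold I01; lra)). rewrite B1, U_1 in Ed. lra. }
    assert (W0 : forall x, I01 x -> w x = U g x).
    { intros x Hx. specialize (Ed x Hx). rewrite c10 in Ed. lra. }
    assert (W1 : forall x, I01 x -> w1 x = U1 g x).
    { intros x Hx. specialize (Ec x Hx). rewrite c10 in Ec. lra. }
    assert (ZZ : forall s, RInt (fun t => k s t * w t) 0 1 = Zv k (U g) s).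
    { intros s. unfold Zv. apply RInt_extR. rewrite Rmin_left, Rmax_right by lra. intros t Ht.
      rewrite W0; auto. unfold I01; lra. }
    assert (Fg : forall s, 0 < s < 1 -> Ph k f g s = g s).
    { intros s Hs. assert (Is : I01 s) by (unfold I01; lra). rewrite gI by auto. rewrite ODE by auto.
      unfold Ph. rewrite clamp_id by auto. rewrite ZZ, W0, W1 by auto. reflexivity. }
    assert (Gg : gbnd g M).
    { intros s Hs. assert (Is : I01 s) by (unfold I01; lra). rewrite gI by auto. rewrite ODE by auto.
      apply Hb. destruct (Bnd s Is) as [Bu Bv]. unfold DM. split; auto. split; auto. split; auto.
      rewrite ZZ. replace (M0 * M2 k * M) with (M2 k * (M0 * M)) by ring.
      apply Zv_bound; auto. apply ctsR_U; auto. intros t It. rewrite <- W0 by auto. apply Bnd; auto. }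
    assert (Eq := fix_uniq k f M L0 L1 L2 g h Hk HM HL0 HL1 HL2 Hl Hq Hg Hch Gg Gh Fg
                    (fun s Hs => Hfh s)).
    intros x Hx. rewrite W0 by auto. apply (U_ext g h x Eq Hx).
Qed.
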